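(* If $T$ is a subcubic tree of order $n$, then $\psi(T)\le \frac{4n+2}{5}$. Furthermore, equality holds if and only if $T$ arises from $K_2$ by iteratively attaching $P_5$'s (i.e., by applying the operation of attaching a $P_5$ zero or more times).
   Context: All graphs are finite, simple and undirected. A subcubic tree is a tree of maximum degree at most $3$. A dissociation set in a graph $G$ is a vertex subset $F$ such that the induced subgraph $G[F]$ has maximum degree at most $1$; the dissociation number $\psi(G)$ is the maximum cardinality of a dissociation set of $G$. Attaching a $P_5$ to a tree $T$: choose a vertex $u$ of $T$ and form the tree $T'$ with $V(T')=V(T)\cup\{x,y,z,j,k\}$ (five new vertices) and $E(T')=E(T)\cup\{uz,zy,zj,yx,jk\}$. *)

(* Defs.v *)
From mathcomp Require Import all_boot.
Set Implicit Arguments. Unset Strict Implicit. Unset Printing Implicit Defensive.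

Definition simple_graph (V : finType) (e : rel V) : Prop :=
  symmetric e /\ irreflexive e.

Definition acyclic (V : finType) (e : rel V) : Prop :=
  forall p : seq V, uniq p -> 2 < size p -> ~~ cycle e p.

Definition connected (V : finType) (e : rel V) : Prop :=
  forall x y : V, connect e x y.

Definition is_tree (V : finType) (e : rel V) : Prop :=
  [/\ simple_graph e, 0 < #|V|, connected e & acyclic e].

Definition deg (V : finType) (e : rel V) (x : V) : nat := #|[set y | e x y]|.

Definition subcubic (V : finType) (e : rel V) : Prop :=
  forall x, deg e x <= 3.

Definition dissociation (V : finType) (e : rel V) (F : {set V}) : bool :=
  [forall x in F, #|[set y in F | e x y]| <= 1].

Definition psi (V : finType) (e : rel V) : nat :=
  \max_(F : {set V} | dissociation e F) #|F|.

(* Attaching a P_5 at u to a tree on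
   {0..n-1}: new vertices x = n, y = n+1, z = n+2, j = n+3, k = n+4 and new
   edges uz, zy, zj, yx, jk. *)
Inductive p5_tree : nat -> seq (nat * nat) -> Prop :=
| p5_K2 : p5_tree 2 [:: (0, 1)]
| p5_attach n E u : p5_tree n E -> u < n ->
    p5_tree (n + 5)
      (E ++ [:: (u, n + 2); (n + 2, n + 1); (n + 2, n + 3);
                (n + 1, n); (n + 3, n + 4)]).

Definition from_K2_by_P5 (V : finType) (e : rel V) : Prop :=
  exists n E (f : V -> nat),
    [/\ p5_tree n E, #|V| = n, injective f, (forall v, f v < n) &
        forall a b, e a b = ((f a, f b) \in E) || ((f b, f a) \in E)].

(* Main.v *)
Require Import Defs.
From mathcomp Require Import all_boot zify.
Set Implicit Arguments. Unset Strict Implicit. Unset Printing Implicit Defensive.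


Section G.
Variable V : finType.
Variable e : rel V.
Hypothesis esy : symmetric e.
Hypothesis eirr : irreflexive e.

Definition rA (A : {set V}) : rel V := fun x y => [&& x \in A, y \in A & e x y].
Definition NB (X : {set V}) v := [set w in X | e v w].
Definition dg (X : {set V}) v := #|NB X v|.
Definition connA (A : {set V}) := forall x y, x \in A -> y \in A -> connect (rA A) x y.

Lemma card_setE (X : {set V}) (P : pred V) : #|[set w in X | P w]| = \sum_(w in X) P w.
Proof.
rewrite -sum1_card (eq_bigl (fun w => (w \in X) && P w)); last by move=> w; rewrite inE.
by rewrite big_mkcondr /=; apply: eq_bigr => w _; case: (P w).
Qed.

Lemma dgE X v : dg X v = \sum_(w in X) e v w.
Proof. exact: card_setE. Qed.

Lemma closed_conn (A C : {set V}) x y :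
  (forall v w, v \in C -> w \in A -> e v w -> w \in C) ->
  x \in C -> connect (rA A) x y -> y \in C.
Proof.
move=> HC Hx /connectP [p Hp ->]; elim: p x Hx Hp => [|w p IH] x Hx //= /andP [/and3P [_ Hw Hxw] Hp].
exact: IH (HC _ _ Hx Hw Hxw) Hp.
Qed.

Lemma conn_retract (A A' : {set V}) (r : V -> V) :
  (forall v w, rA A v w -> r v = r w \/ rA A' (r v) (r w)) ->
  forall a b, connect (rA A) a b -> connect (rA A') (r a) (r b).
Proof.
move=> H a b /connectP [p Hp ->]; elim: p a Hp => [|w p IH] a /=; first by rewrite connect0.
case/andP => Haw Hp; apply: connect_trans (IH _ Hp).
by case: (H _ _ Haw) => [->|]; [exact: connect0 | exact: connect1].
Qed.

Definition cnt (B : {set V}) := \sum_(v in B) dg B v.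

Lemma cnt_add (B : {set V}) w b : w \notin B -> b \in B -> e b w -> cnt B + 2 <= cnt (w |: B).
Proof.
move=> wB bB ebw; rewrite /cnt big_setU1 //=.
have E1 v : dg (w |: B) v = e v w + dg B v by rewrite !dgE big_setU1.
have E2 : \sum_(i in B) dg (w |: B) i = \sum_(i in B) (e i w + dg B i) by apply: eq_bigr => i _; rewrite E1.
rewrite E1 E2 big_split /=.
have H1 : 1 <= dg B w by rewrite dgE (bigD1 b) //= esy ebw.
have H2 : 1 <= \sum_(i in B) e i w by rewrite (bigD1 b) //= ebw.
lia.
Qed.

Lemma grow (A : {set V}) : connA A -> forall k, k <= #|A| ->
  exists2 B : {set V}, B \subset A & #|B| = k /\ 2 * (k - 1) <= cnt B.
Proof.
move=> cA; elim=> [|k IH] Hk.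
  by exists set0; rewrite ?sub0set ?cards0.
have [B BA [cB HB]] := IH (ltnW Hk).
case: k IH Hk cB HB => [|k] IH Hk cB HB.
  have /card_gt0P [a Ha] : 0 < #|A| by [].
  by exists [set a]; rewrite ?sub1set ?cards1.
have /card_gt0P [b Hb] : 0 < #|B| by rewrite cB.
have /card_gt0P [a Ha] : 0 < #|A :\: B|.
  by rewrite cardsD (setIidPr BA) cB; lia.
have [/existsP [v /andP [vB /existsP [w /andP [wAB evw]]]] | ncross] :=
  boolP [exists v in B, exists w in A :\: B, e v w].
  move: wAB; rewrite inE => /andP [wB wA].
  exists (w |: B); first by rewrite subUset sub1set wA BA.
  split; first by rewrite cardsU1 wB cB.
  have := cnt_add wB vB evw; lia.
exfalso; move: Ha; rewrite inE => /andP [/negP aB aA]; apply: aB.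
apply: (closed_conn (A := A) (C := B)) Hb (cA _ _ (subsetP BA _ Hb) aA).
move=> v w vB wA evw; apply/negPn/negP => wB; move/negP: ncross; apply.
by apply/existsP; exists v; rewrite vB; apply/existsP; exists w; rewrite !inE wB wA evw.
Qed.

Lemma conn_edges (A : {set V}) : connA A -> 2 * (#|A| - 1) <= cnt A.
Proof.
move=> cA; have [B BA [cB HB]] := grow cA (leqnn #|A|).
have -> : A = B by apply/eqP; rewrite eq_sym eqEcard BA cB /=.
by rewrite cB.
Qed.


Lemma sum_le_eq (X : {set V}) (g : V -> nat) m :
  (forall v, v \in X -> g v <= m) -> \sum_(v in X) g v = #|X| * m ->
  forall v, v \in X -> g v = m.
Proof.
move=> H Hs v vX.
have h := sumnB (index_enum V) (P := fun i => i \in X) (E1 := g) (E2 := fun _ => m) H.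
rewrite sum_nat_const Hs subnn in h.
move/eqP: h; rewrite sum_nat_eq0 => /forall_inP /(_ v vX) /eqP.
have := H v vX; lia.
Qed.

Lemma sum_eq0 (X : {set V}) (g : V -> nat) :
  \sum_(v in X) g v = 0 -> forall v, v \in X -> g v = 0.
Proof. by move/eqP; rewrite sum_nat_eq0 => /forall_inP H v /H /eqP. Qed.

Lemma dg_split (A F : {set V}) v : F \subset A -> dg A v = dg F v + dg (A :\: F) v.
Proof. by move=> FA; rewrite !dgE (big_setID F) (setIidPr FA). Qed.

Lemma dg_sub (X Y : {set V}) v : X \subset Y -> dg X v <= dg Y v.
Proof.
move=> XY; apply: subset_leq_card; apply/subsetP => w; rewrite !inE => /andP [wX ->].
by rewrite (subsetP XY _ wX).
Qed.

Lemma bound (A F : {set V}) : connA A -> (forall v, v \in A -> dg A v <= 3) ->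
  F \subset A -> (forall v, v \in F -> dg F v <= 1) ->
  5 * #|F| <= 4 * #|A| + 2 /\
  (5 * #|F| = 4 * #|A| + 2 ->
   [/\ #|F| = 4 * #|A :\: F| + 2, (forall v, v \in F -> dg F v = 1),
        (forall v, v \in A :\: F -> dg A v = 3),
        (forall v, v \in A :\: F -> dg (A :\: F) v = 0) &
        \sum_(v in F) dg (A :\: F) v = 3 * #|A :\: F|]).
Proof.
move=> cA dA FA dF.
set S := A :\: F.
have SA : S \subset A by apply: subsetDl.
have ce := conn_edges cA.
have cS : #|A| = #|F| + #|S| by rewrite -(cardsID F A) (setIidPr FA).
have e1 : cnt A = \sum_(v in F) dg A v + \sum_(v in S) dg A v.
  by rewrite /cnt (big_setID F) (setIidPr FA).
have e2 : \sum_(v in F) dg A v = \sum_(v in F) dg F v + \sum_(v in F) dg S v.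
  by rewrite -big_split; apply: eq_bigr => v _; rewrite (dg_split v FA).
have e3 : \sum_(v in S) dg A v = \sum_(v in S) dg F v + \sum_(v in S) dg S v.
  by rewrite -big_split; apply: eq_bigr => v _; rewrite (dg_split v FA).
have ex : \sum_(v in F) dg S v = \sum_(v in S) dg F v.
  rewrite (eq_bigr (fun v => \sum_(w in S) e v w)); last by move=> v _; rewrite dgE.
  rewrite exchange_big /=; apply: eq_bigr => v _; rewrite dgE.
  by apply: eq_bigr => w _; rewrite esy.
have ha : \sum_(v in F) dg F v <= #|F| * 1 by rewrite -sum_nat_const; apply: leq_sum.
have hS : \sum_(v in S) dg A v <= #|S| * 3.
  rewrite -sum_nat_const; apply: leq_sum => v vS; apply: dA; exact: (subsetP SA).
split; first by lia.
move=> Heq.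
have cF : #|F| = 4 * #|S| + 2 by lia.
have ha' : \sum_(v in F) dg F v = #|F| * 1 by lia.
have hS' : \sum_(v in S) dg A v = #|S| * 3 by lia.
have hc : \sum_(v in S) dg S v = 0 by lia.
split => //.
- exact: sum_le_eq ha'.
- apply: sum_le_eq hS' => v vS; apply: dA; exact: (subsetP SA).
- exact: sum_eq0 hc.
- lia.
Qed.


Definition nb1 (X : {set V}) v := odflt v [pick w in X | e v w].

Lemma nb1P (X : {set V}) v : dg X v = 1 -> NB X v = [set nb1 X v].
Proof.
rewrite /dg => /eqP /cards1P [w Hw]; rewrite Hw /nb1.
case: pickP => [w' Hw'|H].
  have : w' \in NB X v by rewrite inE.
  by rewrite Hw inE => /eqP ->.
have : w \in NB X v by rewrite Hw set11.
by rewrite inE H.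
Qed.

Lemma NB_dg0 (X : {set V}) v w : dg X v = 0 -> w \in X -> e v w = false.
Proof.
rewrite /dg => /eqP; rewrite cards_eq0 => /eqP H wX; apply/negP => evw.
have : w \in NB X v by rewrite inE wX evw.
by rewrite H inE.
Qed.

Lemma NB_split (A F : {set V}) v : F \subset A -> NB A v = NB F v :|: NB (A :\: F) v.
Proof.
move=> FA; apply/setP => w; rewrite !inE.
by case wF: (w \in F) => //=; rewrite (subsetP FA w wF) orbF.
Qed.

Lemma neq_of_e a b : e a b -> a != b.
Proof. by apply: contraTneq => ->; rewrite eirr. Qed.

Lemma neq_in (X : {set V}) a b : a \in X -> b \notin X -> a != b.
Proof. by move=> aX; apply: contraNneq => <-. Qed.

Lemma cards_uniq (s : seq V) : uniq s -> #|[set w in s]| = size s.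
Proof. by move=> us; rewrite cardsE; apply/card_uniqP. Qed.

End G.


Section G2.
Variable V : finType.
Variable e : rel V.
Hypothesis esy : symmetric e.
Hypothesis eirr : irreflexive e.

Lemma find_P5 (A F : {set V}) : connA e A -> F \subset A -> 0 < #|A :\: F| ->
  #|F| = 4 * #|A :\: F| + 2 ->
  (forall v, v \in F -> dg e F v = 1) ->
  (forall v, v \in A :\: F -> dg e A v = 3) ->
  (forall v, v \in A :\: F -> dg e (A :\: F) v = 0) ->
  \sum_(v in F) dg e (A :\: F) v = 3 * #|A :\: F| ->
  exists x y z j k u,
    [/\ uniq [:: x; y; z; j; k; u], [&& x \in F, y \in F, j \in F & k \in F],
        z \in A :\: F, u \in A &
        [/\ NB e A x = [set y], NB e A y = [set x; z],
            NB e A z = [set w in [:: y; j; u]], NB e A j = [set k; z] &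
            NB e A k = [set j]]].
Proof.
move=> cA FA S0 cF dF dS3 dSS sF.
set S := A :\: F in S0 cF dS3 dSS sF *.
have SA : S \subset A by apply: subsetDl.
pose p := nb1 e F.
pose a v := dg e S v.
have pF v : v \in F -> NB e F v = [set p v] by move=> vF; apply: nb1P; apply: dF.
have pin v : v \in F -> p v \in F /\ e v (p v).
  move=> vF; have : p v \in NB e F v by rewrite pF // set11.
  by rewrite inE => /andP.
have pp v : v \in F -> p (p v) = v.
  move=> vF; have [pvF evp] := pin v vF.
  have : v \in NB e F (p v) by rewrite inE vF esy.
  by rewrite pF // inE => /eqP.
have NBA v : v \in F -> NB e A v = [set p v] :|: NB e S v.
  by move=> vF; rewrite (NB_split e v FA) pF.
pose n0 := [set v in F | a v == 0].
pose n2 := [set v in F | 1 < a v].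
have c02 : #|n2| + #|S| + 2 <= #|n0|.
  have H : \sum_(v in F) (1 + (1 < a v)) <= \sum_(v in F) (a v + (a v == 0)).
    by apply: leq_sum => v _; case: (a v) => [|[|n]].
  rewrite !big_split /= sum1_card in H.
  have E0 : \sum_(v in F) (a v == 0) = #|n0| by rewrite card_setE.
  have E2 : \sum_(v in F) (1 < a v) = #|n2| by rewrite card_setE.
  have E3 : \sum_(v in F) a v = 3 * #|S| by [].
  lia.
pose L := [set v in F | (a v == 0) && (a (p v) == 1)].
pose B := [set v in F | 1 < a (p v)].
have noZ v : v \in F -> a v = 0 -> a (p v) = 0 -> False.
  move=> vF av apv.
  have [pvF evp] := pin v vF.
  have /card_gt0P [s0 s0S] := S0.
  have s0A : s0 \in A by apply: (subsetP SA).
  have vA : v \in A by apply: (subsetP FA).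
  have : s0 \in [set v; p v].
    apply: (closed_conn (A := A)) (cA _ _ vA s0A); last by rewrite !inE eqxx.
    move=> c w; rewrite !inE => /orP [] /eqP -> wA ecw.
    - case wF: (w \in F).
        have : w \in NB e F v by rewrite inE wF ecw.
        by rewrite pF // inE => ->; rewrite orbT.
      have wS : w \in S by rewrite inE wF wA.
      by rewrite (NB_dg0 av wS) in ecw.
    - case wF: (w \in F).
        have : w \in NB e F (p v) by rewrite inE wF ecw.
        by rewrite pF // pp // inE => ->.
      have wS : w \in S by rewrite inE wF wA.
      by rewrite (NB_dg0 apv wS) in ecw.
  by rewrite !inE => /orP [] /eqP s0E; move: s0S; rewrite inE s0E ?vF ?pvF.
have sub : n0 \subset L :|: B.
  apply/subsetP => v; rewrite !inE => /andP [vF /eqP av]; rewrite vF /=.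
  case E: (a (p v)) => [|[|m]] //; last by rewrite orbT.
    by exfalso; exact: noZ vF av E.
  by rewrite av.
have cB : #|B| <= #|n2|.
  rewrite -(card_in_imset (f := p) (D := B)); last first.
    move=> u w; rewrite !inE => /andP [uF _] /andP [wF _] H.
    by rewrite -(pp u uF) H pp.
  apply: subset_leq_card; apply/subsetP => w /imsetP [v]; rewrite inE => /andP [vF Hv] ->.
  by rewrite inE Hv (proj1 (pin v vF)).
have cL : #|S| + 2 <= #|L|.
  have := subset_leq_card sub; rewrite cardsU; lia.
pose g v := nb1 e S (p v).
have gP v : v \in L -> NB e S (p v) = [set g v].
  by rewrite inE => /and3P [vF _ /eqP apv]; exact: nb1P apv.
have gin v : v \in L -> g v \in S /\ e (p v) (g v).
  move=> vL; have : g v \in NB e S (p v) by rewrite gP // set11.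
  by rewrite inE => /andP.
have [x1 x1L [x2 [x2L ne12 geq]]] :
    exists2 x1, x1 \in L & exists x2, [/\ x2 \in L, x1 != x2 & g x1 = g x2].
  case: (boolP [forall x1 in L, forall x2 in L, (g x1 == g x2) ==> (x1 == x2)]) => [inj|].
    exfalso.
    have H1 : #|g @: L| = #|L|.
      apply: card_in_imset => u w uL wL guw.
      by move/forall_inP: inj => /(_ u uL) /forall_inP /(_ w wL) /implyP /(_ (introT eqP guw)) /eqP.
    have H2 : #|g @: L| <= #|S|.
      apply: subset_leq_card; apply/subsetP => w /imsetP [v vL ->]; exact: (gin v vL).1.
    lia.
  move/forall_inPn => [x1 x1L /forall_inPn [x2 x2L]]; rewrite negb_imply => /andP [/eqP geq ne].
  by exists x1 => //; exists x2.
move: (x1L) (x2L); rewrite !inE => /and3P [x1F /eqP ax1 /eqP apx1] /and3P [x2F /eqP ax2 /eqP apx2].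
have [yF exy] := pin x1 x1F.
have [jF ekj] := pin x2 x2F.
have [zS eyz] := gin x1 x1L.
have [_ ejz] := gin x2 x2L.
rewrite -geq in ejz.
have zA : g x1 \in A by apply: (subsetP SA).
have zF : g x1 \notin F by move: zS; rewrite inE => /andP [].
have NBS0 v : a v = 0 -> NB e S v = set0.
  by move=> av; apply/eqP; rewrite -cards_eq0; apply/eqP.
have NBx : NB e A x1 = [set p x1] by rewrite NBA // NBS0 // setU0.
have NBk : NB e A x2 = [set p x2] by rewrite NBA // NBS0 // setU0.
have NBy : NB e A (p x1) = [set x1; g x1] by rewrite NBA // pp // gP.
have NBj : NB e A (p x2) = [set x2; g x1] by rewrite NBA // pp // gP // geq.
have yj : p x1 != p x2.
  by apply/eqP => H; move/eqP: ne12; apply; rewrite -(pp x1 x1F) H pp.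
have yinz : p x1 \in NB e A (g x1) by rewrite inE (subsetP FA _ yF) esy eyz.
have jinz : p x2 \in NB e A (g x1) by rewrite inE (subsetP FA _ jF) esy ejz.
have dz3 : dg e A (g x1) = 3 := dS3 _ zS.
have : 0 < #|NB e A (g x1) :\: [set p x1; p x2]|.
  rewrite cardsD (setIidPr _) ?cards2 ?yj; last by rewrite subUset !sub1set yinz jinz.
  by move: dz3; rewrite /dg => ->.
case/card_gt0P => u; rewrite !inE => /andP [uyj /andP [uA ezu]].
have xu : x1 != u by apply/eqP => H; move: ezu; rewrite -H esy (NB_dg0 ax1 zS).
have ku : x2 != u by apply/eqP => H; move: ezu; rewrite -H esy (NB_dg0 ax2 zS).
have xy : x1 != p x1 := neq_of_e eirr exy.
have xz : x1 != g x1 := neq_in x1F zF.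
have xj : x1 != p x2 by apply/eqP => H; move: apx2; rewrite -H ax1.
have yz : p x1 != g x1 := neq_in yF zF.
have yk : p x1 != x2 by apply/eqP => H; move: apx1; rewrite H ax2.
have yu : p x1 != u by apply/eqP => H; move: uyj; rewrite H eqxx.
have zj : g x1 != p x2 by rewrite eq_sym; exact: neq_in jF zF.
have zk : g x1 != x2 by rewrite eq_sym; exact: neq_in x2F zF.
have zu : g x1 != u := neq_of_e eirr ezu.
have jk : p x2 != x2 by have := neq_of_e eirr ekj; rewrite eq_sym.
have ju : p x2 != u by apply/eqP => H; move: uyj; rewrite H eqxx orbT.
have NBz : NB e A (g x1) = [set w in [:: p x1; p x2; u]].
  apply/eqP; rewrite eq_sym eqEcard; apply/andP; split.
    apply/subsetP => w; rewrite !inE => /or3P [] /eqP ->.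
    - by move: yinz; rewrite inE.
    - by move: jinz; rewrite inE.
    - by rewrite uA ezu.
  rewrite (@cards_uniq V [:: p x1; p x2; u]); first by move: dz3; rewrite /dg => ->.
  by rewrite /= !inE negb_or yj yu ju.
exists x1, (p x1), (g x1), (p x2), x2, u; split => //.
- by rewrite /= !inE !negb_or xy xz xj ne12 xu yz yj yk yu zj zk zu jk ju ku.
- by rewrite x1F yF jF x2F.
Qed.
End G2.


Definition adjE (E : seq (nat * nat)) a b := ((a, b) \in E) || ((b, a) \in E).
Definition Dn (i : nat) : bool := (i < 2) || ((i - 2) %% 5 != 2).

Lemma adj_cat E1 E2 a b : adjE (E1 ++ E2) a b = adjE E1 a b || adjE E2 a b.
Proof. by rewrite /adjE !mem_cat orbACA. Qed.

Lemma p5_bound n E : p5_tree n E -> forall a b, (a, b) \in E -> a < n /\ b < n.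
Proof.
elim=> [|n' E' u H IH un] a b.
  by rewrite inE xpair_eqE => /andP [/eqP -> /eqP ->].
rewrite mem_cat => /orP [/IH [ha hb]|]; first by lia.
by rewrite !inE !xpair_eqE; lia.
Qed.

Lemma p5_mod n E : p5_tree n E -> n %% 5 = 2.
Proof. by elim=> // n' E' u _ IH _; rewrite modnDr. Qed.

Lemma Dn_nz n : n %% 5 = 2 -> Dn (n + 2) = false.
Proof. by move=> h; rewrite /Dn addnK h eqxx orbF ltnNge leq_addl. Qed.

Definition NEWL n' w := [:: (w, n' + 2); (n' + 2, n' + 1); (n' + 2, n' + 3); (n' + 1, n'); (n' + 3, n' + 4)].

Lemma newD n u a b : adjE (NEWL n u) a b -> a != n + 2 -> b != n + 2 ->
  [|| (a == n) && (b == n + 1), (a == n + 1) && (b == n), (a == n + 3) && (b == n + 4)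
    | (a == n + 4) && (b == n + 3)].
Proof.
move=> H an bn; move: H; rewrite /adjE !inE !xpair_eqE.
do 9?[case/orP]; case/andP => /eqP Ha /eqP Hb; subst;
  first [by rewrite eqxx in an | by rewrite eqxx in bn | by rewrite !eqxx /= ?orbT].
Qed.

Lemma p5_diss n E : p5_tree n E -> forall a b c, Dn a -> Dn b -> Dn c ->
  adjE E a b -> adjE E a c -> b = c.
Proof.
elim=> [|n' E' u H IH un] a b c.
  by move=> _ _ _; rewrite /adjE !inE !xpair_eqE; lia.
have bd := p5_bound H; have md := p5_mod H.
move=> Da Db Dc.
have an : a != n' + 2 by apply: (contraTneq _ Da) => ->; rewrite Dn_nz.
have bn : b != n' + 2 by apply: (contraTneq _ Db) => ->; rewrite Dn_nz.
have cn : c != n' + 2 by apply: (contraTneq _ Dc) => ->; rewrite Dn_nz.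
rewrite !adj_cat => /orP [Hab|Hab] /orP [Hac|Hac].
- exact: IH Hac.
- have ha : a < n' by case/orP: Hab => /bd [].
  by move: (newD Hac an cn) ha; clear; lia.
- have ha : a < n' by case/orP: Hac => /bd [].
  by move: (newD Hab an bn) ha; clear; lia.
- move: (newD Hab an bn) (newD Hac an cn); clear.
  by case/or4P => /andP [/eqP -> /eqP ->] /or4P [] /andP [/eqP ? /eqP ->]; lia.
Qed.

Lemma Dn_k m k : k < 5 -> Dn (k + (5 * m + 2)) = (k != 2).
Proof.
move=> hk; rewrite /Dn addnA addnK ltnNge leq_addl /= addnC mulnC modnMDl modn_small //.
Qed.

Lemma Dn_sum m : \sum_(0 <= i < 5 * m + 2) Dn i = 4 * m + 2.
Proof.
elim: m => [|m IH]; first by rewrite big_nat_recr //= big_nat_recr //= big_geq.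
rewrite (@big_cat_nat _ _ _ (5 * m + 2)) //=; last by rewrite leq_add2r leq_mul2l ltnW.
rewrite IH -{1}(add0n (5 * m + 2)) big_addn.
have -> : 5 * m.+1 + 2 - (5 * m + 2) = 5 by lia.
rewrite !big_nat_recr //= big_geq // !Dn_k //=.
by rewrite mulnS; lia.
Qed.
Definition adjI (i l : nat) : bool :=
  match i, l with 0, 1 | 1, 0 | 1, 2 | 2, 1 | 2, 3 | 3, 2 | 3, 4 | 4, 3 => true | _, _ => false end.

Lemma newXX n' w i l : w < n' -> i < 5 -> l < 5 -> adjE (NEWL n' w) (n' + i) (n' + l) = adjI i l.
Proof.
(move=> hw hi hl; rewrite /adjE !inE !xpair_eqE !eqn_add2l ?addn0;
 case: i hi => [|[|[|[|[|i]]]]] // _; case: l hl => [|[|[|[|[|l]]]]] // _ /=; rewrite ?addn0 ?eqn_add2l //=; lia).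
Qed.

Lemma newXA n' w i b : w < n' -> b < n' -> adjE (NEWL n' w) (n' + i) b = (i == 2) && (b == w).
Proof. (move=> hw hb; rewrite /adjE !inE !xpair_eqE; apply/idP/idP; [move=> H; apply/andP; split; apply/eqP; lia | case/andP => /eqP -> /eqP ->; lia]). Qed.

Lemma newAA n' w a b : a < n' -> b < n' -> adjE (NEWL n' w) a b = false.
Proof. by move=> ha hb; rewrite /adjE !inE !xpair_eqE; lia. Qed.


Section G4.
Variable V : finType.
Variable e : rel V.
Hypothesis esy : symmetric e.
Hypothesis eirr : irreflexive e.

Ltac elim5 := case/orP => [/eqP->|/orP [/eqP->|/orP [/eqP->|/orP [/eqP->|/eqP->]]]].

Lemma adjE_out1 n E p q : p5_tree n E -> n <= p -> adjE E p q = false.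
Proof.
move=> H np; rewrite /adjE; apply/negbTE; rewrite negb_or.
by apply/andP; split; apply/negP => /(p5_bound H); lia.
Qed.

Lemma adjE_out2 n E p q : p5_tree n E -> n <= q -> adjE E p q = false.
Proof.
move=> H np; rewrite /adjE; apply/negbTE; rewrite negb_or.
by apply/andP; split; apply/negP => /(p5_bound H); lia.
Qed.

Lemma adjC E p q : adjE E p q = adjE E q p.
Proof. by rewrite /adjE orbC. Qed.


Lemma char N : forall (A F : {set V}), #|A| <= N -> connA e A ->
  (forall v, v \in A -> dg e A v <= 3) -> F \subset A ->
  (forall v, v \in F -> dg e F v <= 1) -> 5 * #|F| = 4 * #|A| + 2 ->
  exists n E (f : V -> nat), [/\ p5_tree n E, #|A| = n, {in A &, injective f},
    (forall v, v \in A -> f v < n) &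
    forall a b, a \in A -> b \in A -> e a b = adjE E (f a) (f b)].
Proof.
elim: N => [|N IH] A F cAN cA dA FA dF Heq.
  have := subset_leq_card FA; lia.
have [_ /(_ Heq) [cF dF1 dS3 dSS sF]] := bound esy cA dA FA dF.
case: (posnP #|A :\: F|) => [S0|S0].
  have AF : A = F.
    apply/eqP; rewrite eqEsubset FA andbT -setD_eq0; apply/eqP/eqP.
    by rewrite -cards_eq0 S0.
  have /card_gt0P [v vF] : 0 < #|F| by lia.
  set w := nb1 e F v.
  have NBv : NB e F v = [set w] by apply: nb1P; apply: dF1.
  have : w \in NB e F v by rewrite NBv set11.
  rewrite inE => /andP [wF evw].
  have wv : (w == v) = false.
    by have := neq_of_e eirr evw; rewrite eq_sym => /negbTE.
  have Fvw : F = [set v; w].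
    apply/eqP; rewrite eq_sym eqEcard subUset !sub1set vF wF /= cards2 eq_sym wv.
    by lia.
  exists 2, [:: (0, 1)], (fun a => if a == v then 0 else 1); split.
  - exact: p5_K2.
  - by rewrite AF cF S0.
  - move=> a b; rewrite AF Fvw !inE => /orP [] /eqP -> /orP [] /eqP ->;
      by rewrite ?eqxx ?wv.
  - by move=> a _; case: (a == v).
  - move=> a b; rewrite AF Fvw !inE => /orP [] /eqP -> /orP [] /eqP ->;
      by rewrite ?eqxx ?wv ?eirr ?evw ?(esy w v) ?evw.
have [x [y [z [j [k [u [Hu /and4P [xF yF jF kF] zAF uA [NBx NBy NBz NBj NBk]]]]]]]] :=
  find_P5 esy eirr cA FA S0 cF dF1 dS3 dSS sF.
move: (Hu); rewrite /= !inE !negb_or.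
case/and5P => /and5P [xy xz xj xk xu] /and4P [yz yj yk yu] /and3P [zj zk zu] /andP [jk ju] /andP [ku _].
have nxy := negbTE xy.
have nyx : (y == x) = false by rewrite eq_sym (negbTE xy).
have nxz := negbTE xz.
have nzx : (z == x) = false by rewrite eq_sym (negbTE xz).
have nxj := negbTE xj.
have njx : (j == x) = false by rewrite eq_sym (negbTE xj).
have nxk := negbTE xk.
have nkx : (k == x) = false by rewrite eq_sym (negbTE xk).
have nxu := negbTE xu.
have nux : (u == x) = false by rewrite eq_sym (negbTE xu).
have nyz := negbTE yz.
have nzy : (z == y) = false by rewrite eq_sym (negbTE yz).
have nyj := negbTE yj.
have njy : (j == y) = false by rewrite eq_sym (negbTE yj).
have nyk := negbTE yk.
have nky : (k == y) = false by rewrite eq_sym (negbTE yk).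
have nyu := negbTE yu.
have nuy : (u == y) = false by rewrite eq_sym (negbTE yu).
have nzj := negbTE zj.
have njz : (j == z) = false by rewrite eq_sym (negbTE zj).
have nzk := negbTE zk.
have nkz : (k == z) = false by rewrite eq_sym (negbTE zk).
have nzu := negbTE zu.
have nuz : (u == z) = false by rewrite eq_sym (negbTE zu).
have njk := negbTE jk.
have nkj : (k == j) = false by rewrite eq_sym (negbTE jk).
have nju := negbTE ju.
have nuj : (u == j) = false by rewrite eq_sym (negbTE ju).
have nku := negbTE ku.
have nuk : (u == k) = false by rewrite eq_sym (negbTE ku).

move: zAF; rewrite inE => /andP [zF zA].
have xA := subsetP FA _ xF. have yA := subsetP FA _ yF.
have jA := subsetP FA _ jF. have kA := subsetP FA _ kF.
pose X := [set w in [:: x; y; z; j; k]].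
pose A' := A :\: X.
pose F' := F :\: [set w in [:: x; y; j; k]].
have XA : X \subset A by apply/subsetP => w; rewrite !inE; elim5.
have cX : #|X| = 5 by rewrite cards_uniq // /= !inE !negb_or xy xz xj xk yz yj yk zj zk jk.
have uX : u \notin X by rewrite !inE nux nuy nuz nuj nuk.
have uA' : u \in A' by rewrite in_setD uX uA.
have cA' : #|A'| = #|A| - 5 by rewrite cardsD (setIidPr XA) cX.
have Y4 : [set w in [:: x; y; j; k]] \subset F.
  by apply/subsetP => w; rewrite !inE => /orP [/eqP->|/orP [/eqP->|/orP [/eqP->|/eqP->]]].
have cY : #|[set w in [:: x; y; j; k]]| = 4 by rewrite cards_uniq // /= !inE !negb_or xy xj xk yj yk jk.
have cF' : #|F'| = #|F| - 4 by rewrite cardsD (setIidPr Y4) cY.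
have F'A' : F' \subset A'.
  apply/subsetP => w; rewrite !in_setD => /andP [wY wF]; rewrite (subsetP FA _ wF) andbT.
  have wz := neq_in wF zF.
  by move: wY; rewrite !inE (negbTE wz) /=.
have dA' v : v \in A' -> dg e A' v <= 3.
  move=> vA'; apply: leq_trans (dg_sub e v (subsetDl A X)) _.
  by apply: dA; move: vA'; rewrite in_setD => /andP [].
have dF' v : v \in F' -> dg e F' v <= 1.
  move=> vF'; apply: leq_trans (dg_sub e v (subsetDl F _)) _.
  by apply: dF; move: vF'; rewrite in_setD => /andP [].
have Heq' : 5 * #|F'| = 4 * #|A'| + 2.
  have h1 := subset_leq_card XA; have h2 := subset_leq_card Y4.
  clear -h1 h2 Heq cA' cF' cX cY; lia.
have eNB v w : w \in A -> e v w = (w \in NB e A v) by move=> wA; rewrite inE wA.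
have NBsub v : v \in X -> v != z -> NB e A v \subset X.
  rewrite !inE; elim5.
  - by move=> _; rewrite NBx sub1set /X !inE !eqxx ?orbT.
  - by move=> _; rewrite NBy subUset !sub1set /X !inE !eqxx !orbT.
  - by rewrite eqxx.
  - by move=> _; rewrite NBj subUset !sub1set /X !inE !eqxx !orbT.
  - by move=> _; rewrite NBk sub1set /X !inE !eqxx !orbT.
have cross v w : v \in X -> w \in A' -> e v w -> v = z /\ w = u.
  move=> vX; rewrite in_setD => /andP [wX wA] evw.
  have wN : w \in NB e A v by rewrite inE wA evw.
  case: (boolP (v == z)) => [/eqP vz|vz].
    split => //; move: wN wX; rewrite vz NBz !inE.
    by case/or3P => /eqP -> //; rewrite eqxx ?orbT.
  by move: wX; rewrite (subsetP (NBsub v vX vz) _ wN).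
pose r := fun v => if v \in X then u else v.
have rcond v w : rA e A v w -> r v = r w \/ rA e A' (r v) (r w).
  case/and3P => vA wA evw; rewrite /r.
  case vX: (v \in X); case wX: (w \in X).
  - by left.
  - left; have wA' : w \in A' by rewrite in_setD wX wA.
    by have [_ ->] := cross v w vX wA' evw.
  - left; have vA' : v \in A' by rewrite in_setD vX vA.
    by have [_ ->] := cross w v wX vA' (etrans (esy w v) evw).
  - by right; rewrite /rA !in_setD vX wX vA wA evw.
have cA'' : connA e A'.
  move=> a b; rewrite !in_setD => /andP [aX aA] /andP [bX bA].
  have := conn_retract rcond (cA a b aA bA).
  by rewrite /r (negbTE aX) (negbTE bX).
have hN : #|A'| <= N by clear -cAN cA'; lia.
have [n' [E' [f' [pt cn finj fbd fedge]]]] := IH A' F' hN cA'' dA' F'A' dF' Heq'.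
pose f := fun v => if v == x then n' else if v == y then n'+1 else if v == z then n'+2
  else if v == j then n'+3 else if v == k then n'+4 else f' v.
have fx : f x = n' + 0 by rewrite /f eqxx addn0.
have fy : f y = n'+1 by rewrite /f nyx eqxx.
have fz : f z = n'+2 by rewrite /f nzx nzy eqxx.
have fj : f j = n'+3 by rewrite /f njx njy njz eqxx.
have fk : f k = n'+4 by rewrite /f nkx nky nkz nkj eqxx.
have fA' w : w \in A' -> f w = f' w.
  rewrite in_setD !inE !negb_or => /andP [/and5P [wx wy wz wj wk] _].
  by rewrite /f (negbTE wx) (negbTE wy) (negbTE wz) (negbTE wj) (negbTE wk).
have fu := fbd u uA'.
have cls w : w \in A -> w \in A' \/ w \in X.
  by move=> wA; case wX: (w \in X); [right | left; rewrite in_setD wX wA].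
have fX w : w \in X -> n' <= f w < n' + 5.
  by rewrite /X !inE; elim5; rewrite ?fx ?fy ?fz ?fj ?fk leq_addr /= ltn_add2l.
exists (n' + 5), (E' ++ NEWL n' (f' u)), f; split.
- exact: p5_attach pt (fbd u uA').
- by clear -cn cA' XA cX; have := subset_leq_card XA; lia.
- move=> a b aA bA.
  case: (cls a aA) => [aA'|aX]; case: (cls b bA) => [bA'|bX].
  + by rewrite !fA' //; exact: finj.
  + rewrite (fA' a aA') => fab; exfalso; have h1 := fX b bX; have h2 := fbd a aA'.
    by clear -fab h1 h2; lia.
  + rewrite (fA' b bA') => fab; exfalso; have h1 := fX a aX; have h2 := fbd b bA'.
    by clear -fab h1 h2; lia.
  + move: aX bX; rewrite /X !inE; elim5; elim5;
    by rewrite ?fx ?fy ?fz ?fj ?fk => /eqP; rewrite eqn_add2l.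
- move=> v vA; case: (cls v vA) => [vA'|vX].
    by rewrite fA' //; apply: leq_trans (fbd v vA') _; exact: leq_addr.
  by have /andP [_ ->] := fX v vX.
have Hxa a b : a \in X -> b \in A' -> e a b = adjE (E' ++ NEWL n' (f' u)) (f a) (f b).
  move=> aX bA'.
  have /andP [fa1 fa2] := fX a aX.
  rewrite (fA' b bA') adj_cat (adjE_out1 _ pt fa1) /=.
  case: (boolP (b == u)) => [/eqP ->|bu].
    by move: aX; rewrite /X !inE; elim5; rewrite eNB // ?NBx ?NBy ?NBz ?NBj ?NBk !inE ?nxy ?nxz ?nxj ?nxk ?nxu ?nyx ?nyz ?nyj ?nyk ?nyu ?nzx ?nzy ?nzj ?nzk ?nzu ?njx ?njy ?njz ?njk ?nju ?nkx ?nky ?nkz ?nkj ?nku ?nux ?nuy ?nuz ?nuj ?nuk ?eqxx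
      ?fx ?fy ?fz ?fj ?fk newXA // ?eqxx /=.
  have eab : e a b = false.
    by apply/negP => /(cross a b aX bA') [_ /eqP]; rewrite (negbTE bu).
  have fbu : f' b != f' u.
    by apply/eqP => H; move/eqP: bu; apply; exact: finj H.
  have fb := fbd b bA'.
  by rewrite eab; move: aX; rewrite /X !inE; elim5; rewrite ?fx ?fy ?fz ?fj ?fk newXA // (negbTE fbu) andbF /=.
have Haa a b : a \in X -> b \in X -> e a b = adjE (E' ++ NEWL n' (f' u)) (f a) (f b).
  move=> aX bX.
  have /andP [fa1 fa2] := fX a aX.
  rewrite adj_cat (adjE_out1 _ pt fa1) /=.
  move: aX bX; rewrite /X !inE; elim5; elim5; by rewrite eNB // ?NBx ?NBy ?NBz ?NBj ?NBk !inE ?nxy ?nxz ?nxj ?nxk ?nxu ?nyx ?nyz ?nyj ?nyk ?nyu ?nzx ?nzy ?nzj ?nzk ?nzu ?njx ?njy ?njz ?njk ?nju ?nkx ?nky ?nkz ?nkj ?nku ?nux ?nuy ?nuz ?nuj ?nuk ?eqxx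
      ?fx ?fy ?fz ?fj ?fk newXX //=.
move=> a b aA bA.
case: (cls a aA) => [aA'|aX]; case: (cls b bA) => [bA'|bX].
- by rewrite !fA' // fedge // adj_cat (newAA _ (fbd a aA') (fbd b bA')) orbF.
- by rewrite esy adjC; apply: Hxa.
- exact: Hxa.
- exact: Haa.
Qed.
End G4.


Lemma lower_count (V : finType) n (f : V -> nat) (fbd : forall v, f v < n) :
  injective f -> #|V| = n -> #|[set w in [set: V] | Dn (f w)]| = \sum_(0 <= i < n) Dn i.
Proof.
move=> finj cn.
pose h := fun v => Ordinal (fbd v).
have hinj : injective h by move=> a b /(congr1 val) /= /finj.
have hc : #|'I_n| <= #|V| by rewrite card_ord cn.
have [g hg gh] := inj_card_bij hinj hc.
rewrite card_setE (reindex g); last by apply: onW_bij; exact: (Bijective gh hg).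
rewrite big_mkord (eq_bigl (fun _ => true)); last by move=> i; rewrite in_setT.
apply: eq_bigr => i _.
by have -> : f (g i) = val (h (g i)) by []; rewrite gh.
Qed.

Theorem theorem2p3 (V : finType) (e : rel V) :
  is_tree e -> subcubic e ->
  5 * psi e <= 4 * #|V| + 2 /\
  (5 * psi e = 4 * #|V| + 2 <-> from_K2_by_P5 e).
Proof.
move=> [[esy eirr] V0 conn acyc] sub.
have rAT : rA e [set: V] =2 e by move=> a b; rewrite /rA !in_setT.
have cA : connA e [set: V] by move=> x y _ _; rewrite (eq_connect rAT).
have dA v : v \in [set: V] -> dg e [set: V] v <= 3.
  move=> _; have := sub v; rewrite /deg /dg /NB.
  by have -> : [set w in [set: V] | e v w] = [set y | e v y] by apply/setP => w; rewrite !inE.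
have dissP F : dissociation e F -> forall v, v \in F -> dg e F v <= 1.
  by move/forall_inP.
have [F0 F0d psiE] : exists2 F0, dissociation e F0 & psi e = #|F0|.
  have := @eq_bigmax_cond _ [pred F : {set V} | dissociation e F] (fun F => #|F|).
  case=> [|F0 HF0 H].
    apply/card_gt0P; exists set0; rewrite inE.
    by apply/forall_inP => v; rewrite inE.
  exists F0; first by move: HF0; rewrite inE.
  by rewrite /psi -H; apply: eq_bigl => F; rewrite inE.
have [ub equ] := bound esy cA dA (subsetT F0) (dissP _ F0d).
rewrite cardsT in ub equ.
rewrite psiE; split => //; split.
  move=> Heq.
  have Heq' : 5 * #|F0| = 4 * #|[set: V]| + 2 by rewrite cardsT.
  have [n [E [f [pt cn finj fbd fedge]]]] :=
    char esy eirr (leqnn #|[set: V]|) cA dA (subsetT F0) (dissP _ F0d) Heq'.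
  exists n, E, f; split => //.
  - by rewrite -cn cardsT.
  - by move=> a b; apply: finj; rewrite in_setT.
  - by move=> v; apply: fbd; rewrite in_setT.
  - by move=> a b; apply: fedge; rewrite in_setT.
move=> [n [E [f [pt cn finj fbd fedge]]]].
pose D := [set w in [set: V] | Dn (f w)].
have Dd : dissociation e D.
  apply/forall_inP => v; rewrite !inE => Dv.
  apply/card_le1_eqP => w1 w2; rewrite !inE => /andP [Dw1 ew1] /andP [Dw2 ew2].
  apply: finj; apply: (p5_diss pt Dv Dw2 Dw1).
    by move: ew2; rewrite fedge.
  by move: ew1; rewrite fedge.
have cD : 5 * #|D| = 4 * #|V| + 2.
  rewrite /D (lower_count fbd finj cn) -cn.
  rewrite cn.
  have m5 := p5_mod pt.
  have -> : n = 5 * (n %/ 5) + 2 by rewrite {1}(divn_eq n 5) m5 mulnC.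
  rewrite Dn_sum; move: (n %/ 5) => m; clear; lia.
have := @leq_bigmax_cond _ (dissociation e) (fun F : {set V} => #|F|) D Dd.
rewrite -/(psi e) psiE => h.
apply/eqP; rewrite eqn_leq ub /= -cD leq_mul2l /=; exact: h.
Qed.
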